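(* Let $\delta_x,\delta_t>0$, let $T_x,T_t$ be the shift operators $T_xf(x,t)=f(x+\delta_x,t)$, $T_tf(x,t)=f(x,t+\delta_t)$, and let $\Delta_x=(T_x-1)/\delta_x$, $\Delta_t=(T_t-1)/\delta_t$. Consider the discrete heat equation $$\Delta_t\phi-(\Delta_x)^2\phi=0,$$ and the discrete Burgers equation for $u(x,t)$, $$\Delta_t u=\frac{1+\delta_x u}{1+\delta_t v}\,\Delta_x v,\qquad v=\Delta_x u+u\,T_xu,$$ which are related by the discrete Cole–Hopf transformation $\Delta_x\phi=u\phi$ (so that $\Delta_t\phi=v\phi$). Let $S$ be a linear operator (a finite combination of products of powers of $T_x^{\pm1},T_t^{\pm1}$ with coefficients depending on $x,t$) such that the flow $\phi_\lambda=S\phi$ is a symmetry (commuting flow) of the discrete heat equation. Then the same operator $S$ yields a symmetry of the discrete Burgers equation whose flow is $$u_\lambda=(1+\delta_x u)\,\Delta_x\!\Big(\frac{S\phi}{\phi}\Big),$$ where $S\phi/\phi$ can be expressed in terms of $u(x,t)$ and its shifted values alone.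
   Context: A symmetry (commuting flow) of a difference equation on the fixed lattice is an evolution $\partial w/\partial\lambda=Q$ in an auxiliary parameter $\lambda$ compatible with the equation, i.e. taking solutions to solutions; $\phi_\lambda$, $u_\lambda$ denote $\partial\phi/\partial\lambda$, $\partial u/\partial\lambda$. Here $\phi$ is assumed nonvanishing so that $u=\Delta_x\phi/\phi$ is defined. *)

(* Defs.v *)
From Stdlib Require Import Reals ZArith List.
From Coquelicot Require Import Coquelicot.
Open Scope R_scope.

(* Fields on the fixed lattice: (m,n) : Z*Z stands for (x0 + m dx, t0 + n dt). *)
Definition field := Z -> Z -> R.

Definition Tx (f : field) : field := fun m n => f (m + 1)%Z n.
Definition Tt (f : field) : field := fun m n => f m (n + 1)%Z.
Definition Dx (dx : R) (f : field) : field := fun m n => (Tx f m n - f m n) / dx.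
Definition Dt (dt : R) (f : field) : field := fun m n => (Tt f m n - f m n) / dt.

Definition heat (dx dt : R) (phi : field) : field :=
  fun m n => Dt dt phi m n - Dx dx (Dx dx phi) m n.

Definition burgers_v (dx : R) (u : field) : field :=
  fun m n => Dx dx u m n + u m n * Tx u m n.
Definition burgers (dx dt : R) (u : field) : field :=
  fun m n => Dt dt u m n
    - (1 + dx * u m n) / (1 + dt * burgers_v dx u m n) * Dx dx (burgers_v dx u) m n.

(* Burgers fields for which the equation is well defined (denominators nonzero),
   i.e. Tx phi/phi and Tt phi/phi are nonzero. *)
Definition burgers_nondeg (dx dt : R) (u : field) : Prop :=
  forall m n, 1 + dx * u m n <> 0 /\ 1 + dt * burgers_v dx u m n <> 0.

Definition cole_hopf (dx : R) (phi : field) : field := fun m n => Dx dx phi m n / phi m n.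

(* Linear operator S = sum_k c_k(x,t) Tx^{i_k} Tt^{j_k}, (i_k, j_k) in Z*Z. *)
Definition lin_op := list (Z * Z * field).
Definition apply_op (S : lin_op) (f : field) : field :=
  fun m n => fold_right
    (fun (p : Z * Z * field) acc => let '(i, j, c) := p in c m n * f (m + i)%Z (n + j)%Z + acc)
    0 S.

(* Symmetry (commuting flow) w_lambda = Q[w] of the equation E[w] = 0, restricted
   to the admissible fields D: the equation linearised along Q vanishes on solutions. *)
Definition is_symmetry (E : field -> field) (Q : field -> field) (D : field -> Prop) : Prop :=
  forall w, D w -> (forall m n, E w m n = 0) ->
    forall m n, is_derive (fun eps => E (fun m' n' => w m' n' + eps * Q w m' n') m n) 0 0.

(* Ratio  (Tx^i Tt^j phi)/phi  expressed in u alone, using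
   Tx phi / phi = 1 + dx u and Tt phi / phi = 1 + dt v. *)
Fixpoint prod_up (a : Z -> R) (k : Z) (len : nat) : R :=
  match len with O => 1 | S l => a k * prod_up a (k + 1)%Z l end.
Definition shift_ratio (a : Z -> R) (i : Z) : R :=
  if (0 <=? i)%Z then prod_up a 0 (Z.to_nat i) else / prod_up a i (Z.to_nat (- i)).
Definition shift_ratio_u (dx dt : R) (u : field) (i j : Z) : field :=
  fun m n =>
    shift_ratio (fun k => 1 + dx * u (m + k)%Z n) i *
    shift_ratio (fun k => 1 + dt * burgers_v dx u (m + i)%Z (n + k)%Z) j.

(* S phi / phi written in terms of u and its shifts *)
Definition S_ratio_u (dx dt : R) (S : lin_op) (u : field) : field :=
  fun m n => fold_right
    (fun (p : Z * Z * field) acc => let '(i, j, c) := p in c m n * shift_ratio_u dx dt u i j m n + acc)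
    0 S.

Definition burgers_flow (dx dt : R) (S : lin_op) (u : field) : field :=
  fun m n => (1 + dx * u m n) * Dx dx (S_ratio_u dx dt S u) m n.

(* Main.v *)
Require Import Defs.
From Stdlib Require Import Reals ZArith List Lra Lia.
From Stdlib Require Import FunctionalExtensionality.
From Coquelicot Require Import Coquelicot.
Open Scope R_scope.

Definition Gb dx dt a b c d :=
  let v0 := (c - a)/dx + a*c in let v1 := (d - c)/dx + c*d in
  (b - a)/dt - (1 + dx*a)/(1 + dt*v0) * ((v1 - v0)/dx).
Definition CH dx x y := (y - x)/dx / x.
Definition QF dx x y s t := (1 + dx * CH dx x y) * ((t/y - s/x)/dx).
Definition HT dx dt x y z := x + dt * ((z - y)/dx - (y - x)/dx)/dx.

Lemma HT_nz dx dt x y z : HT dx dt x y z <> 0 -> dx <> 0 -> x*(dx*dx) + dt*(z-y-(y-x)) <> 0.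
Proof.
  intros H Hdx Hz; apply H.
  assert (E : HT dx dt x y z = (x*(dx*dx) + dt*(z-y-(y-x)))/(dx*dx)) by (unfold HT; field; auto).
  rewrite E, Hz; unfold Rdiv; apply Rmult_0_l.
Qed.

Lemma key dx dt p0 p1 p2 p3 s0 s1 s2 s3 :
  dx <> 0 -> dt <> 0 -> p0 <> 0 -> p1 <> 0 -> p2 <> 0 -> p3 <> 0 ->
  HT dx dt p0 p1 p2 <> 0 -> HT dx dt p1 p2 p3 <> 0 ->
  is_derive (fun e => Gb dx dt
     (CH dx p0 p1 + e * QF dx p0 p1 s0 s1)
     (CH dx (HT dx dt p0 p1 p2) (HT dx dt p1 p2 p3) + e * QF dx (HT dx dt p0 p1 p2) (HT dx dt p1 p2 p3) (HT dx dt s0 s1 s2) (HT dx dt s1 s2 s3))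
     (CH dx p1 p2 + e * QF dx p1 p2 s1 s2)
     (CH dx p2 p3 + e * QF dx p2 p3 s2 s3)) 0 0.
Proof.
  intros.
  assert (E : 1 + dt * (((p2 - p1) / dx / p1 + - ((p1 - p0) / dx / p0)) * / dx + (p1 - p0) / dx / p0 * ((p2 - p1) / dx / p1))
     = HT dx dt p0 p1 p2 / p0) by (unfold HT; field; auto).
  assert (E2 : HT dx dt p0 p1 p2 / p0 <> 0) by (apply Rmult_integral_contrapositive_currified; auto; apply Rinv_neq_0_compat; auto).
  unfold Gb, QF.
  unfold CH.
  auto_derive.
  - repeat rewrite Rmult_0_l; repeat rewrite Rplus_0_r. rewrite E. exact E2.
  - repeat rewrite Rmult_0_l; repeat rewrite Rplus_0_r. rewrite E.
    unfold HT in *. field. repeat split; auto. all: apply HT_nz; auto.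
Qed.

Lemma prod_up_last a k l : prod_up a k (S l) = prod_up a k l * a (k + Z.of_nat l)%Z.
Proof.
  revert k; induction l as [|l IH]; intros k; simpl.
  - rewrite Z.add_0_r; ring.
  - simpl in IH. rewrite IH. replace (k + Z.pos (Pos.of_succ_nat l))%Z with (k + 1 + Z.of_nat l)%Z by lia. ring.
Qed.

Lemma prod_up_nz a k l : (forall k, a k <> 0) -> prod_up a k l <> 0.
Proof.
  intros Ha; revert k; induction l as [|l IH]; intros k; simpl.
  - lra.
  - apply Rmult_integral_contrapositive_currified; auto.
Qed.

Lemma shift_ratio_succ a i : (forall k, a k <> 0) ->
  shift_ratio a (i + 1) = shift_ratio a i * a i.
Proof.
  intros Ha. unfold shift_ratio.
  destruct (Z.leb_spec 0 i) as [Hi|Hi].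
  - destruct (Z.leb_spec 0 (i+1)) as [_|Hi2]; [|lia].
    replace (Z.to_nat (i+1)) with (S (Z.to_nat i)) by lia.
    rewrite prod_up_last. f_equal. f_equal. lia.
  - destruct (Z.eq_dec i (-1)) as [->|Hne].
    + simpl. field. apply Ha.
    + destruct (Z.leb_spec 0 (i+1)) as [Hi2|_]; [lia|].
      replace (Z.to_nat (- i)) with (S (Z.to_nat (- (i+1)))) by lia.
      simpl. field. split; [apply prod_up_nz; auto| apply Ha].
Qed.

Lemma shift_ratio_nz a i : (forall k, a k <> 0) -> shift_ratio a i <> 0.
Proof.
  intros Ha. pattern i; apply Z.peano_ind; clear i; [ | intros i IHi | intros i IHi ].
  - unfold shift_ratio; simpl; lra.
  - unfold Z.succ; rewrite shift_ratio_succ by auto.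
    apply Rmult_integral_contrapositive_currified; auto.
  - intro Hz; apply IHi.
    assert (E : i = (Z.pred i + 1)%Z) by lia. rewrite E.
    rewrite (shift_ratio_succ a (Z.pred i) Ha), Hz. ring.
Qed.

Lemma shift_ratio_eq a f i : (forall k, f k <> 0) -> (forall k, a k = f (k+1)%Z / f k) ->
  shift_ratio a i = f i / f 0%Z.
Proof.
  intros Hf Ha.
  assert (Ha' : forall k, a k <> 0).
  { intro k; rewrite Ha. apply Rmult_integral_contrapositive_currified; auto.
    apply Rinv_neq_0_compat; auto. }
  pattern i; apply Z.peano_ind; clear i; [ | intros i IHi | intros i IHi ].
  - unfold shift_ratio; simpl. field. auto.
  - unfold Z.succ; rewrite shift_ratio_succ, IHi, Ha; auto. field. split; auto.
  - apply (Rmult_eq_reg_r (a (Z.pred i))); auto.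
    rewrite <- shift_ratio_succ; auto.
    replace (Z.pred i + 1)%Z with i by lia. rewrite IHi, Ha.
    replace (Z.pred i + 1)%Z with i by lia. field. split; auto.
Qed.

Lemma ux dx phi m n : dx <> 0 -> phi m n <> 0 ->
  1 + dx * cole_hopf dx phi m n = phi (m+1)%Z n / phi m n.
Proof. intros. unfold cole_hopf, Defs.Dx, Defs.Tx. field. auto. Qed.

Lemma vt dx dt phi m n : dx <> 0 -> dt <> 0 -> (forall m n, phi m n <> 0) ->
  heat dx dt phi m n = 0 ->
  1 + dt * burgers_v dx (cole_hopf dx phi) m n = phi m (n+1)%Z / phi m n.
Proof.
  intros Hdx Hdt Hnz H. unfold heat, Defs.Dt, Defs.Dx, Defs.Tt, Defs.Tx in H.
  assert (E : phi m (n+1)%Z = phi m n + dt * (((phi (m+1+1)%Z n - phi (m+1)%Z n) / dx - (phi (m+1)%Z n - phi m n) / dx) / dx)).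
  { apply (Rmult_eq_reg_l (/dt)). 2: apply Rinv_neq_0_compat; auto.
    apply (Rplus_eq_reg_r (- (phi m n / dt))).
    transitivity ((phi m (n + 1)%Z - phi m n) / dt); [field; auto|].
    apply Rminus_diag_uniq in H. rewrite H. field; auto. }
  rewrite E. unfold burgers_v, cole_hopf, Defs.Dx, Defs.Tx.
  field. repeat split; auto.
Qed.

Lemma su dx dt phi i j m n : dx <> 0 -> dt <> 0 -> (forall m n, phi m n <> 0) ->
  (forall m n, heat dx dt phi m n = 0) ->
  shift_ratio_u dx dt (cole_hopf dx phi) i j m n = phi (m+i)%Z (n+j)%Z / phi m n.
Proof.
  intros Hdx Hdt Hnz Hh. unfold shift_ratio_u.
  rewrite (shift_ratio_eq _ (fun k => phi (m+k)%Z n)); auto.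
  2:{ intro k. rewrite ux; auto. rewrite Z.add_assoc; reflexivity. }
  rewrite (shift_ratio_eq _ (fun k => phi (m+i)%Z (n+k)%Z)); auto.
  2:{ intro k. rewrite vt; auto. rewrite Z.add_assoc; reflexivity. }
  rewrite !Z.add_0_r. field. split; auto.
Qed.

Lemma part1 dx dt S phi : dx <> 0 -> dt <> 0 -> (forall m n, phi m n <> 0) ->
  (forall m n, heat dx dt phi m n = 0) ->
  forall m n, S_ratio_u dx dt S (cole_hopf dx phi) m n = apply_op S phi m n / phi m n.
Proof.
  intros Hdx Hdt Hnz Hh m n. unfold S_ratio_u, apply_op.
  induction S as [|[[i j] c] S' IH]; simpl.
  - field; auto.
  - rewrite IH, su; auto. field; auto.
Qed.

Lemma heat_lin dx dt w q e m n : dx <> 0 -> dt <> 0 ->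
  heat dx dt (fun m' n' => w m' n' + e * q m' n') m n = heat dx dt w m n + e * heat dx dt q m n.
Proof. intros. unfold heat, Defs.Dt, Defs.Dx, Defs.Tt, Defs.Tx. field. auto. Qed.

Lemma sym_heat dx dt S phi : dx <> 0 -> dt <> 0 ->
  is_symmetry (heat dx dt) (apply_op S) (fun _ => True) ->
  (forall m n, heat dx dt phi m n = 0) ->
  forall m n, heat dx dt (apply_op S phi) m n = 0.
Proof.
  intros Hdx Hdt Hs Hh m n.
  specialize (Hs phi I Hh m n).
  assert (H2 : is_derive (fun e => heat dx dt phi m n + e * heat dx dt (apply_op S phi) m n) 0
                 (heat dx dt (apply_op S phi) m n)) by (auto_derive; auto; ring).
  apply (is_derive_ext _ (fun e => heat dx dt phi m n + e * heat dx dt (apply_op S phi) m n)) in Hs.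
  2:{ intro e; apply heat_lin; auto. }
  apply is_derive_unique in Hs. apply is_derive_unique in H2. congruence.
Qed.

Definition mkphi dx dt (u : field) : field := fun m n =>
  shift_ratio (fun k => 1 + dt * burgers_v dx u 0%Z k) n * shift_ratio (fun k => 1 + dx * u k n) m.

Theorem theorem5p4 (dx dt : R) (S : lin_op) :
  0 < dx -> 0 < dt ->
  is_symmetry (heat dx dt) (apply_op S) (fun _ => True) ->
  (forall phi : field,
      (forall m n, phi m n <> 0) ->
      (forall m n, heat dx dt phi m n = 0) ->
      forall m n, S_ratio_u dx dt S (cole_hopf dx phi) m n = apply_op S phi m n / phi m n)
  /\ is_symmetry (burgers dx dt) (burgers_flow dx dt S) (burgers_nondeg dx dt).
Proof.
  intros Hdx0 Hdt0 Hsym.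
  assert (Hdx : dx <> 0) by lra. assert (Hdt : dt <> 0) by lra.
  split.
  { intros; apply part1; auto. }
  intros u Hnd Hb m n.
  assert (phix : forall m n, mkphi dx dt u (m+1)%Z n = (1 + dx * u m n) * mkphi dx dt u m n).
  { intros m' n'. unfold mkphi. rewrite shift_ratio_succ. ring. intro k; apply Hnd. }
  assert (phinz : forall m n, mkphi dx dt u m n <> 0).
  { intros m' n'. unfold mkphi. apply Rmult_integral_contrapositive_currified;
    apply shift_ratio_nz; intro k; apply Hnd. }
  assert (compat : forall m n, (1 + dx * u m (n+1)%Z) * (1 + dt * burgers_v dx u m n)
      = (1 + dt * burgers_v dx u (m+1)%Z n) * (1 + dx * u m n)).
  { intros m' n'. specialize (Hb m' n'). destruct (Hnd m' n') as [H1 H2].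
    unfold burgers, Defs.Dt, Defs.Dx, Defs.Tt, Defs.Tx in Hb. unfold Defs.Dx, Defs.Tx in Hb.
    set (a := u m' n') in *. set (b := u m' (n'+1)%Z) in *.
    set (v := burgers_v dx u m' n') in *. set (v' := burgers_v dx u (m'+1)%Z n') in *.
    assert (E : dx*(b-a)*(1+dt*v) - dt*(1+dx*a)*(v'-v) =
       ((b - a) / dt - (1 + dx * a) / (1 + dt * v) * ((v' - v) / dx)) * (dt*dx*(1+dt*v))).
    { field. auto. }
    rewrite Hb, Rmult_0_l in E.
    apply Rminus_diag_uniq. rewrite <- E. ring. }
  assert (phit : forall n m, mkphi dx dt u m (n+1)%Z = (1 + dt * burgers_v dx u m n) * mkphi dx dt u m n).
  { intros n' m'. pattern m'; apply Z.peano_ind; clear m'; [ | intros m' IHm' | intros m' IHm' ].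
    - unfold mkphi. rewrite shift_ratio_succ. unfold shift_ratio; simpl. ring.
      intro k; apply Hnd.
    - unfold Z.succ. rewrite !phix, IHm', <- Rmult_assoc, compat. ring.
    - replace m' with (Z.pred m' + 1)%Z in IHm' by lia.
      rewrite !phix in IHm'. rewrite <- Rmult_assoc, <- compat, Rmult_assoc in IHm'.
      apply Rmult_eq_reg_l in IHm'; auto. apply Hnd. }
  assert (chp : cole_hopf dx (mkphi dx dt u) = u).
  { apply functional_extensionality; intro m'; apply functional_extensionality; intro n'.
    unfold cole_hopf, Defs.Dx, Defs.Tx. rewrite phix. field. split; auto. }
  assert (hphi : forall m n, heat dx dt (mkphi dx dt u) m n = 0).
  { intros m' n'. unfold heat, Defs.Dt, Defs.Dx, Defs.Tt, Defs.Tx. rewrite phit, !phix.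
    unfold burgers_v, Defs.Dx, Defs.Tx. field. split; auto. }
  set (phi := mkphi dx dt u) in *. clearbody phi. subst u.
  pose proof (sym_heat dx dt S phi Hdx Hdt Hsym hphi) as hpsi.
  set (psi := apply_op S phi) in *.
  assert (bf : forall m n, burgers_flow dx dt S (cole_hopf dx phi) m n =
      QF dx (phi m n) (phi (m+1)%Z n) (psi m n) (psi (m+1)%Z n)).
  { intros m' n'. unfold burgers_flow, Defs.Dx, Defs.Tx. rewrite !part1; auto. }
  assert (ht : forall w, (forall m n, heat dx dt w m n = 0) -> forall m n,
     w m (n+1)%Z = HT dx dt (w m n) (w (m+1)%Z n) (w (m+1+1)%Z n)).
  { intros w Hw m' n'. specialize (Hw m' n'). unfold heat, Defs.Dt, Defs.Dx, Defs.Tt, Defs.Tx in Hw.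
    unfold HT. apply (Rmult_eq_reg_l (/dt)). 2: apply Rinv_neq_0_compat; auto.
    apply (Rplus_eq_reg_r (- (w m' n' / dt))).
    transitivity ((w m' (n' + 1)%Z - w m' n') / dt); [field; auto|].
    apply Rminus_diag_uniq in Hw. rewrite Hw. field; auto. }
  pose proof (key dx dt (phi m n) (phi (m+1)%Z n) (phi (m+1+1)%Z n) (phi (m+1+1+1)%Z n)
     (psi m n) (psi (m+1)%Z n) (psi (m+1+1)%Z n) (psi (m+1+1+1)%Z n)) as K.
  rewrite <- !(ht phi hphi), <- !(ht psi hpsi) in K.
  specialize (K Hdx Hdt (phinz _ _) (phinz _ _) (phinz _ _) (phinz _ _) (phinz _ _) (phinz _ _)).
  eapply is_derive_ext; [|exact K].
  intro e. unfold burgers, burgers_v, Defs.Dt, Defs.Dx, Defs.Tt, Defs.Tx. cbv beta.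
  rewrite !bf. unfold Gb, CH, cole_hopf, Defs.Dx, Defs.Tx. reflexivity.
Qed.
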